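(* Let $E$ be a nonzero real Banach space, $S\colon E\rightrightarrows E^*$ be closed, monotone and quasidense, and suppose $R(S^{\mathbb F})\subset\widehat E:=\{\widehat x:x\in E\}$. Then $G(S^{\mathbb F})=\{(x^*,\widehat x):(x,x^* )\in G(S)\}$.
   Context: $\widehat x\in E^{**}$ is the canonical image of $x$ ($\langle x^*,\widehat x\rangle=\langle x,x^*\rangle$). For a multifunction $S\colon E\rightrightarrows E^*$ with nonempty graph $G(S)$: closed means $G(S)$ norm-closed; monotone means $\langle s-t,s^*-t^*\rangle\ge0$ on $G(S)$; quasidense means for every $(x,x^* )$, $\inf_{(s,s^* )\in G(S)}[\tfrac12\|s-x\|^2+\tfrac12\|s^*-x^*\|^2+\langle s-x,s^*-x^*\rangle]\le0$. Let $\varphi_S(x,x^* )=\sup_{(s,s^* )\in G(S)}[\langle s,x^*\rangle+\langle x,s^*\rangle-\langle s,s^*\rangle]$ and $\varphi_S^*$ its conjugate on $E^*\times E^{**}$ under $\langle (x,x^* ),(y^*,y^{**})\rangle=\langle x,y^*\rangle+\langle x^*,y^{**}\rangle$. For $S$ closed, monotone, quasidense, the Fitzpatrick extension $S^{\mathbb F}\colon E^*\rightrightarrows E^{**}$ is given by $(y^*,y^{**})\in G(S^{\mathbb F})$ iff $\varphi_S^*(y^*,y^{**})=\langle y^*,y^{**}\rangle$; $R(S^{\mathbb F})$ is its range. *)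

(* Defs.v *)
From HB Require Import structures.
From mathcomp Require Import all_boot all_order all_algebra.
From mathcomp Require Import all_classical all_reals all_analysis.
Set Implicit Arguments. Unset Strict Implicit. Unset Printing Implicit Defensive.
Import Order.TTheory GRing.Theory Num.Theory.
Import numFieldNormedType.Exports.
Local Open Scope classical_set_scope.
Local Open Scope ring_scope.

Section Fitzpatrick.
Variables (R : realType) (E : completeNormedModType R).

Definition lin_fun (f : E -> R) :=
  forall (a : R) (x y : E), f (a *: x + y) = a * f x + f y.

Record dual := Dual {
  dual_fun :> E -> R;
  dual_lin : lin_fun dual_fun;
  dual_bnd : exists C : R, forall x : E, `|dual_fun x| <= C * `|x| }.

Definition dnorm (f : E -> R) : R :=
  sup [set `|f x| | x in [set x : E | `|x| <= 1]].

Record bidual := Bidual {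
  bidual_fun :> dual -> R;
  bidual_lin : forall (a : R) (f g h : dual),
      (forall x, h x = a * f x + g x) ->
      bidual_fun h = a * bidual_fun f + bidual_fun g;
  bidual_bnd : exists C : R, forall f : dual, `|bidual_fun f| <= C * dnorm f }.

Definition is_hat (x : E) (ybb : bidual) := forall f : dual, ybb f = f x.

(* A multifunction S : E =>> E^* is given by its graph G(S). *)
Variable G : set (E * dual).

Definition closed_graph :=
  forall (u : nat -> E * dual) (x : E) (xs : dual),
    (forall n, G (u n)) ->
    ((fun n => `|(u n).1 - x| + dnorm (fun z => (u n).2 z - xs z)) @ \oo --> (0:R)) ->
    G (x, xs).

Definition monotone_graph :=
  forall s t, G s -> G t -> 0 <= s.2 (s.1 - t.1) - t.2 (s.1 - t.1).

Definition quasidense_graph :=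
  forall (x : E) (xs : dual),
    (ereal_inf [set ((`|s.1 - x| ^+ 2) / 2
                     + (dnorm (fun z => s.2 z - xs z) ^+ 2) / 2
                     + (s.2 (s.1 - x) - xs (s.1 - x)))%:E | s in G] <= 0)%E.

Definition phiS (x : E) (xs : dual) : \bar R :=
  ereal_sup [set (xs s.1 + s.2 x - s.2 s.1)%:E | s in G].

Definition phiS_star (ys : dual) (ybb : bidual) : \bar R :=
  ereal_sup [set ((ys p.1 + ybb p.2)%:E - phiS p.1 p.2)%E | p in [set: E * dual]].

Definition graph_SF : set (dual * bidual) :=
  [set p | phiS_star p.1 p.2 = (p.2 p.1)%:E].

End Fitzpatrick.

(* Main.v *)
Require Import Defs.
From HB Require Import structures.
From mathcomp Require Import all_boot all_order all_algebra.
From mathcomp Require Import all_classical all_reals all_analysis.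
From mathcomp Require Import lra.
Import Order.TTheory GRing.Theory Num.Theory.
Import numFieldNormedType.Exports.
Local Open Scope classical_set_scope.
Local Open Scope ring_scope.

Lemma dual0 (R : realType) (E : completeNormedModType R) (f : dual E) : f 0 = 0.
Proof.
have := dual_lin f 1 0 0; rewrite scale1r addr0 mul1r => h.
lra.
Qed.

Lemma dualB (R : realType) (E : completeNormedModType R) (f : dual E) (x y : E) :
  f (x - y) = f x - f y.
Proof.
have h1 := dual_lin f (-1) y 0; rewrite addr0 dual0 addr0 scaleN1r mulN1r in h1.
have := dual_lin f 1 x (- y); rewrite scale1r mul1r h1 => ->; done.
Qed.

Lemma phiS_G (R : realType) (E : completeNormedModType R) (G : set (E * dual E))
  (Hmon : monotone_graph G) s : G s -> phiS G s.1 s.2 = (s.2 s.1)%:E.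
Proof.
move=> Gs; apply/le_anti/andP; split.
  apply/ereal_supP => _ [t Gt <-]; rewrite lee_fin.
  have := Hmon s t Gs Gt; rewrite !dualB; lra.
apply: ereal_sup_ubound; exists s => //; congr (_%:E); lra.
Qed.

Theorem lemma3p2 (R : realType) (E : completeNormedModType R)
  (G : set (E * dual E))
  (HE : exists x : E, x != 0)
  (HG : G !=set0)
  (Hcl : closed_graph G) (Hmon : monotone_graph G) (Hqd : quasidense_graph G)
  (Hrange : forall p, graph_SF G p -> exists x : E, is_hat x p.2) :
  forall (ys : dual E) (ybb : bidual E),
    graph_SF G (ys, ybb) <-> exists x : E, G (x, ys) /\ is_hat x ybb.
Proof.
move=> ys ybb; split.
  move=> hSF; have [x hx] := Hrange _ hSF; exists x; split => //.
  move: hSF; rewrite /graph_SF /= hx => hSF.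
  have mrel : forall s, G s -> 0 <= s.2 (s.1 - x) - ys (s.1 - x).
    move=> s Gs.
    have : ((ys s.1 + ybb s.2)%:E - phiS G s.1 s.2 <= phiS_star G ys ybb)%E.
      by apply: ereal_sup_ubound; exists s.
    rewrite hSF phiS_G // hx -EFinB lee_fin !dualB; lra.
  have hn : forall n : nat, exists s, G s /\
     `| `|s.1 - x| + dnorm (fun z => s.2 z - ys z) | < harmonic n.
    move=> n; set h := harmonic n.
    have h0 : 0 < h := harmonic_gt0 n.
    have := Hqd x ys.
    have : (0 < ((h / 2) ^+ 2 / 2)%:E)%E.
      by rewrite lte_fin; apply: divr_gt0 => //; apply: exprn_gt0; apply: divr_gt0.
    move=> /[swap] /le_lt_trans /[apply] /ereal_inf_lt [_ [s Gs <-]].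
    rewrite lte_fin => hs; exists s; split => //.
    have c0 := mrel s Gs.
    set a := `|s.1 - x| in hs *; set b := dnorm _ in hs *.
    have a0 : 0 <= a by apply: normr_ge0.
    have hb : `|b| ^+ 2 = b ^+ 2 by rewrite -normrX ger0_norm // sqr_ge0.
    have hab : `|a + b| <= a + `|b| by rewrite -{2}(ger0_norm a0) ler_normD.
    have nb0 := normr_ge0 b.
    have : a ^+ 2 + `|b| ^+ 2 < (h / 2) ^+ 2 by rewrite hb; lra.
    move=> hh.
    have hs2 : (a + `|b|) ^+ 2 < h ^+ 2.
      have := sqr_ge0 (a - `|b|); rewrite !expr2 in hh *; nra.
    suff : a + `|b| < h by lra.
    rewrite !expr2 in hs2; nra.
  have [u hu] := choice hn.
  apply: (Hcl u) => [n|]; first by case: (hu n).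
  apply: (squeeze_cvgr (f := fun n => - harmonic n) (h := fun n => harmonic n)).
  - apply: nearW => n; have [_ /ltW] := hu n; rewrite ler_norml.
    by move=> /andP[-> ->].
  - by rewrite -oppr0; apply: cvgN; exact: cvg_harmonic.
  - exact: cvg_harmonic.
move=> [x [Gx hx]]; rewrite /graph_SF /= hx.
apply/le_anti/andP; split.
  apply/ereal_supP => _ [p _ <-]; rewrite hx.
  have : ((ys p.1 + p.2 x - ys x)%:E <= phiS G p.1 p.2)%E.
    by apply: ereal_sup_ubound; exists (x, ys) => //=; congr (_%:E); lra.
  case: (phiS G p.1 p.2) => [r| |] //=; rewrite ?lee_fin => h.
    lra.
  by rewrite /adde /= leNye.
apply: ereal_sup_ubound; exists (x, ys) => //.
by rewrite hx (@phiS_G _ _ _ Hmon _ Gx) /= -EFinB; congr (_%:E); lra.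
Qed.
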